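(* Let $M\in\mathbb{N}$ and let $f$ be a meromorphic function. Then $$\min_{0\le t\le M}\nu^0_{\mathcal{A}_{q^{M-t}}\mathcal{D}_q^tf}(x)=\min_{0\le t\le M}\nu^0_{\eta_q^{M-2t}f}(x)$$ for all $x\in\mathbb{C}$ with $|x|>\mathcal{R}(M,q)$.
   Context: Fix $q\in\mathbb{C}$ with $0<|q|<1$. Every $x\in\mathbb{C}$ is written uniquely as $x=\frac{z+z^{-1}}{2}$ with $|z|\ge 1$ (when $|z|=1$, $z=x+i\sqrt{1-x^2}$). $(\eta_q f)(x)=f\big(\tfrac{q^{1/2}z+q^{-1/2}z^{-1}}{2}\big)$, $(\eta_q^{-1}f)(x)=f\big(\tfrac{q^{-1/2}z+q^{1/2}z^{-1}}{2}\big)$, $\eta_q^0f=f$, $\eta_q^{\pm k}$ the $k$-fold compositions; $(\eta_{q^{\pm k}}f)(x)=f\big(\tfrac{q^{\pm k/2}z+q^{\mp k/2}z^{-1}}{2}\big)$. $\mathcal{R}(M,q)>0$ is a constant such that for $|x|>\mathcal{R}(M,q)$ one has $\eta_q^{\pm k}f=\eta_{q^{\pm k}}f$ for $0\le k\le M$ and the shifts compose additively. Askey-Wilson operator $(\mathcal{D}_qf)(x)=\frac{(\eta_qf)(x)-(\eta_q^{-1}f)(x)}{\eta_qx-\eta_q^{-1}x}$ ($x\ne\pm1$; limit at $\pm1$), $\mathcal{D}_q^0f=f$, $\mathcal{D}_q^k=\mathcal{D}_q\circ\mathcal{D}_q^{k-1}$; $(\mathcal{A}_{q^k}f)(x)=\frac{(\eta_{q^k}f)(x)+(\eta_{q^{-k}}f)(x)}{2}$,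 $\mathcal{A}_{q^0}f=f$. $\nu^0_g(x)\ge0$ denotes the order of zero of $g$ at $x$ (zero if $g(x)\ne0$). *)

(* Defs.v *)
From Stdlib Require Import Reals ZArith List ClassicalEpsilon.
From Coquelicot Require Import Coquelicot.

Open Scope C_scope.

Definition CpowZ (s : C) (a : Z) : C :=
  match a with
  | Z0 => 1
  | Zpos p => s ^ (Pos.to_nat p)
  | Zneg p => / (s ^ (Pos.to_nat p))
  end.

(* x = (z + z^{-1})/2 with |z| >= 1; when |z| = 1, z = x + i sqrt(1-x^2),
   i.e. the root on the unit circle with nonnegative imaginary part. *)
Definition zspec (x z : C) : Prop :=
  z <> 0 /\ (z + / z) / 2 = x /\
  (1 < Cmod z \/ (Cmod z = 1%R /\ (0 <= Im z)%R)).

Definition zof (x : C) : C := epsilon (inhabits (RtoC 0)) (zspec x).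

(* The point (s^a z + s^{-a} z^{-1})/2, where s = q^{1/2}; so the map
   x |-> sigma s a x is the shift underlying eta_{q^{a}} *)
Definition sigma (s : C) (a : Z) (x : C) : C :=
  (CpowZ s a * zof x + CpowZ s (- a) / zof x) / 2.

Definition eta (s : C) (f : C -> C) : C -> C := fun x => f (sigma s 1 x).
Definition etainv (s : C) (f : C -> C) : C -> C := fun x => f (sigma s (-1) x).

Definition etaZ (s : C) (j : Z) (f : C -> C) : C -> C :=
  match j with
  | Z0 => f
  | Zpos p => Nat.iter (Pos.to_nat p) (eta s) f
  | Zneg p => Nat.iter (Pos.to_nat p) (etainv s) f
  end.

Definition eta_qpow (s : C) (a : Z) (f : C -> C) : C -> C :=
  fun x => f (sigma s a x).

Definition AW_quot (s : C) (f : C -> C) (x : C) : C :=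
  (eta s f x - etainv s f x) / (eta s (fun y => y) x - etainv s (fun y => y) x).

Definition AW (s : C) (f : C -> C) : C -> C :=
  fun x =>
    if excluded_middle_informative (x = 1 \/ x = - (1)) then
      epsilon (inhabits (RtoC 0)) (fun l : C => filterlim (AW_quot s f) (locally' x) (locally l))
    else AW_quot s f x.

Definition AWn (s : C) (k : nat) (f : C -> C) : C -> C := Nat.iter k (AW s) f.

Definition Aop (s : C) (k : nat) (f : C -> C) : C -> C :=
  match k with
  | O => f
  | S _ => fun x => (eta_qpow s (Z.of_nat k) f x + eta_qpow s (- Z.of_nat k) f x) / 2
  end.

Definition holo_on_disc (h : C -> C) (z : C) (r : R) : Prop :=
  forall w, (Cmod (w - z) < r)%R -> ex_derive h w.

(* Meromorphic on C (values at the isolated singularities are irrelevant):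
   around every point, some power (w-z)^k * f w agrees on a punctured disc
   with a function holomorphic on the whole disc. *)
Definition meromorphic (f : C -> C) : Prop :=
  forall z : C, exists (k : nat) (r : R) (h : C -> C),
    (0 < r)%R /\ holo_on_disc h z r /\
    forall w, (Cmod (w - z) < r)%R -> w <> z -> (w - z) ^ k * f w = h w.

Definition zero_order_ge (g : C -> C) (x : C) (n : nat) : Prop :=
  n = O \/
  exists (r : R) (h : C -> C),
    (0 < r)%R /\ holo_on_disc h x r /\
    forall w, (Cmod (w - x) < r)%R -> w <> x -> g w = (w - x) ^ n * h w.

(* nu^0_g(x) in N U {oo}, represented as option nat (None = +oo, which only
   happens when g vanishes identically near x). *)
Definition nu0 (g : C -> C) (x : C) : option nat :=
  epsilon (inhabits None) (fun o =>
    match o with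
    | Some n => zero_order_ge g x n /\ ~ zero_order_ge g x (S n)
    | None => forall n, zero_order_ge g x n
    end).

Definition omin (a b : option nat) : option nat :=
  match a, b with
  | None, _ => b
  | _, None => a
  | Some m, Some n => Some (Nat.min m n)
  end.

Definition min_upto (M : nat) (F : nat -> option nat) : option nat :=
  fold_right omin None (map F (seq 0 (S M))).

(* The defining property of the constant R(M,q): for |x| > R,
   eta_q^{+-k} f = eta_{q^{+-k}} f for 0 <= k <= M, and the shifts compose
   additively: eta_{q^a} eta_{q^b} f = eta_{q^{a+b}} f for |a|,|b| <= M. *)
Definition R_admissible (s : C) (M : nat) (Rc : R) : Prop :=
  (0 < Rc)%R /\
  forall (f : C -> C) (x : C), (Rc < Cmod x)%R ->
    (forall k : nat, (k <= M)%nat ->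
       etaZ s (Z.of_nat k) f x = eta_qpow s (Z.of_nat k) f x /\
       etaZ s (- Z.of_nat k) f x = eta_qpow s (- Z.of_nat k) f x) /\
    (forall a b : Z, (Z.abs a <= Z.of_nat M)%Z -> (Z.abs b <= Z.of_nat M)%Z ->
       eta_qpow s a (eta_qpow s b f) x = eta_qpow s (a + b) f x).

(* Main.v *)
From Pilot Require Import Defs.
From Stdlib Require Import Reals ZArith List Lia Lra Psatz ClassicalEpsilon Classical FunctionalExtensionality.
From Coquelicot Require Import Coquelicot.
Import Pilot.Defs.
Open Scope C_scope.

Lemma is_derive_quad (f : C -> C) (x l : C) (d K : R) :
  (0 < d)%R ->
  (forall w, (Cmod (w - x) < d)%R ->
     (Cmod (f w - f x - (w - x) * l) <= K * (Cmod (w - x) * Cmod (w - x)))%R) ->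
  is_derive f x l.
Proof.
  intros Hd HK. unfold is_derive. split. apply is_linear_scal_l.
  intros x' Hx'. assert (Ex : x = x') by (apply (@is_filter_lim_locally_unique C_AbsRing (AbsRing_NormedModule C_AbsRing)); exact Hx'). subst x'.
  intros eps.
  assert (Hr : (0 < Rmin d (eps / (Rabs K + 1)))%R).
  { apply Rmin_pos; auto. apply Rdiv_lt_0_compat. apply cond_pos.
    pose proof (Rabs_pos K); lra. }
  eapply filter_imp; [| apply (@locally_ball_norm C_AbsRing (AbsRing_NormedModule C_AbsRing) x (mkposreal _ Hr))].
  intros w Hw. unfold ball_norm in Hw. simpl in Hw.
  change (Cmod (f w - f x - (w - x) * l) <= eps * Cmod (w - x))%R.
  change (Cmod (w - x) < Rmin d (eps / (Rabs K + 1)))%R in Hw.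
  assert (H1 : (Cmod (w - x) < d)%R) by (eapply Rlt_le_trans; [exact Hw| apply Rmin_l]).
  assert (H2 : (Cmod (w - x) < eps / (Rabs K + 1))%R) by (eapply Rlt_le_trans; [exact Hw| apply Rmin_r]).
  specialize (HK w H1).
  pose proof (Cmod_ge_0 (w - x)) as H0.
  pose proof (Rabs_pos K). pose proof (Rle_abs K).
  assert (H4 : (Cmod (w - x) * (Rabs K + 1) < eps)%R).
  { apply (Rmult_lt_compat_r (Rabs K + 1)) in H2; [| lra].
    unfold Rdiv in H2. rewrite Rmult_assoc, Rinv_l in H2; lra. }
  pose proof (cond_pos eps).
  nra.
Qed.
Lemma Cmult_comm' : forall n m : C_AbsRing, mult n m = mult m n.
Proof. intros; apply Cmult_comm. Qed.

Definition exd (f : C -> C) (w : C) := @ex_derive C_AbsRing C_NormedModule f w.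

Lemma exd_plus f g w : exd f w -> exd g w -> exd (fun y => f y + g y) w.
Proof. intros [a Ha] [b Hb]. exists (plus a b). exact (is_derive_plus f g w a b Ha Hb). Qed.

Lemma conv1 f w a : @is_derive C_AbsRing (AbsRing_NormedModule C_AbsRing) f w a -> @is_derive C_AbsRing C_NormedModule f w a.
Proof. intros [_ H]. split. apply is_linear_scal_l. intros x Hx eps. specialize (H x Hx eps). exact H. Qed.
Lemma conv2 f w a : @is_derive C_AbsRing C_NormedModule f w a -> @is_derive C_AbsRing (AbsRing_NormedModule C_AbsRing) f w a.
Proof. intros [_ H]. split. apply is_linear_scal_l. intros x Hx eps. specialize (H x Hx eps). exact H. Qed.

Lemma exd_mult f g w : exd f w -> exd g w -> exd (fun y => f y * g y) w.
Proof. intros [a Ha] [b Hb]. eexists. apply conv1. exact (is_derive_mult f g w a b (conv2 _ _ _ Ha) (conv2 _ _ _ Hb) Cmult_comm'). Qed.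

Lemma exd_const (c w : C) : exd (fun _ => c) w.
Proof. exists zero. apply is_derive_const. Qed.

Lemma exd_id (w : C) : exd (fun y => y) w.
Proof. exists one. apply conv1. apply (@is_derive_id C_AbsRing). Qed.

Lemma exd_comp f g w : exd f (g w) -> exd g w -> exd (fun y => f (g y)) w.
Proof. intros [a Ha] [b Hb]. eexists. exact (is_derive_comp f g w a b Ha (conv2 _ _ _ Hb)). Qed.

Lemma exd_ext f g w : (forall y, f y = g y) -> exd f w -> exd g w.
Proof. intros H. replace g with f; auto. apply functional_extensionality_dep; auto. Qed.

Lemma Cmod_sub_ge (a b : C) : (Cmod a - Cmod b <= Cmod (a - b))%R.
Proof. pose proof (Cmod_triangle (a - b) b). replace (a - b + b) with a in H by ring. lra. Qed.

Lemma exd_Cinv (u0 : C) : u0 <> 0 -> exd Cinv u0.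
Proof.
  intros Hu. pose proof (proj1 (Cmod_gt_0 u0) Hu) as Hm.
  exists (- / (u0 * u0)).
  apply (is_derive_quad _ _ _ (Cmod u0 / 2) (2 / (Cmod u0 * Cmod u0 * Cmod u0))); [lra|].
  intros w Hw.
  assert (Hw2 : (Cmod u0 / 2 <= Cmod w)%R).
  { pose proof (Cmod_sub_ge u0 (u0 - w)). replace (u0 - (u0 - w)) with w in H by ring.
    rewrite <- Cmod_opp in Hw. replace (- (w - u0)) with (u0 - w) in Hw by ring. lra. }
  assert (Hw0 : w <> 0). { intro E; subst. rewrite Cmod_0 in Hw2. lra. }
  replace (/ w - / u0 - (w - u0) * - / (u0 * u0)) with ((w - u0) * (w - u0) / (w * u0 * u0))
    by (field; auto).
  unfold Cdiv. rewrite !Cmod_mult, Cmod_inv, !Cmod_mult.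
  2:{ repeat apply Cmult_neq_0; auto. }
  pose proof (Cmod_ge_0 (w - u0)).
  assert (0 < Cmod w) by lra.
  assert (Hinv : (/ (Cmod w * Cmod u0 * Cmod u0) <= 2 / (Cmod u0 * Cmod u0 * Cmod u0))%R).
  { apply Rle_trans with (/ (Cmod u0 / 2 * Cmod u0 * Cmod u0))%R.
    - apply Rinv_le_contravar. repeat apply Rmult_lt_0_compat; lra.
      repeat apply Rmult_le_compat_r; lra.
    - right. field. lra. }
  rewrite Rmult_comm. apply Rmult_le_compat_r; [nra|]. exact Hinv.
Qed.

Lemma holo_mono h x r r' : holo_on_disc h x r -> (r' <= r)%R -> holo_on_disc h x r'.
Proof. intros H Hr w Hw. apply H. lra. Qed.

Lemma zog_ext (g g' : C -> C) x n r : (0 < r)%R ->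
  (forall w, (Cmod (w - x) < r)%R -> w <> x -> g w = g' w) ->
  zero_order_ge g x n -> zero_order_ge g' x n.
Proof.
  intros Hr He [->|[r1 [h [Hr1 [Hh Heq]]]]]; [left; auto|right].
  exists (Rmin r r1), h. split; [apply Rmin_pos; auto|split].
  - eapply holo_mono; eauto. apply Rmin_r.
  - intros w Hw Hne. pose proof (Rmin_l r r1). pose proof (Rmin_r r r1).
    rewrite <- He by (auto; lra). apply Heq; auto; lra.
Qed.

Lemma zog_plus g1 g2 x n : zero_order_ge g1 x n -> zero_order_ge g2 x n ->
  zero_order_ge (fun w => g1 w + g2 w) x n.
Proof.
  intros [->|[r1 [h1 [Hr1 [Hh1 Heq1]]]]]; [left; auto|].
  intros [->|[r2 [h2 [Hr2 [Hh2 Heq2]]]]]; [left; auto|right].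
  exists (Rmin r1 r2), (fun w => h1 w + h2 w).
  pose proof (Rmin_l r1 r2). pose proof (Rmin_r r1 r2).
  split; [apply Rmin_pos; auto|split].
  - intros w Hw. apply exd_plus; [apply Hh1|apply Hh2]; lra.
  - intros w Hw Hne. rewrite Heq1, Heq2 by (auto; lra). ring.
Qed.

Lemma zog_mulh (a g : C -> C) x n r : (0 < r)%R -> holo_on_disc a x r ->
  zero_order_ge g x n -> zero_order_ge (fun w => a w * g w) x n.
Proof.
  intros Hr Ha [->|[r1 [h1 [Hr1 [Hh1 Heq1]]]]]; [left; auto|right].
  exists (Rmin r r1), (fun w => a w * h1 w).
  pose proof (Rmin_l r r1). pose proof (Rmin_r r r1).
  split; [apply Rmin_pos; auto|split].
  - intros w Hw. apply exd_mult; [apply Ha|apply Hh1]; lra.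
  - intros w Hw Hne. rewrite Heq1 by (auto; lra). ring.
Qed.

Lemma holo_const (c x : C) r : holo_on_disc (fun _ => c) x r.
Proof. intros w _. apply exd_const. Qed.

Lemma zog_scal (c : C) g x n : zero_order_ge g x n -> zero_order_ge (fun w => c * g w) x n.
Proof. apply (zog_mulh (fun _ => c) g x n 1). lra. apply holo_const. Qed.

Lemma zog_down g x n : zero_order_ge g x (S n) -> zero_order_ge g x n.
Proof.
  intros [H|[r [h [Hr [Hh Heq]]]]]; [discriminate|].
  destruct n as [|n]; [left; auto|right].
  exists r, (fun w => (w - x) * h w). split; auto. split.
  - intros w Hw. apply exd_mult; [|apply Hh; auto].
    apply (exd_ext (fun y => y + (- x))). intros; reflexivity.
    apply exd_plus; [apply exd_id|apply exd_const].
  - intros w Hw Hne. rewrite Heq by auto. rewrite (Cpow_S (w - x) (S n)). ring.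
Qed.

Lemma zog_le g x n m : (m <= n)%nat -> zero_order_ge g x n -> zero_order_ge g x m.
Proof. induction 1; auto. intros H0. apply IHle. apply zog_down; auto. Qed.

Definition geo (o : option nat) (n : nat) : Prop :=
  match o with None => True | Some m => (n <= m)%nat end.

Lemma nu0_char g x n : geo (nu0 g x) n <-> zero_order_ge g x n.
Proof.
  unfold nu0.
  match goal with |- geo (epsilon ?i ?P) _ <-> _ => 
    assert (HP : P (epsilon i P)); [apply epsilon_spec|] end.
  - destruct (classic (forall n, zero_order_ge g x n)) as [Hall|Hn].
    + exists None; exact Hall.
    + apply not_all_ex_not in Hn. destruct Hn as [k Hk].
      assert (exists m, zero_order_ge g x m /\ ~ zero_order_ge g x (S m)) as [m Hm].
      { clear - Hk. induction k as [|k IH].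
        - exfalso; apply Hk; left; auto.
        - destruct (classic (zero_order_ge g x k)) as [H|H]; [exists k; auto| apply IH; auto]. }
      exists (Some m); exact Hm.
  - destruct (epsilon _ _) as [m|]; simpl in *.
    + destruct HP as [H1 H2]. split; intro H.
      * eapply zog_le; eauto.
      * destruct (le_lt_dec n m) as [|Hlt]; auto. exfalso; apply H2. eapply zog_le; [|exact H]. lia.
    + split; auto.
Qed.

Lemma geo_omin a b n : geo (omin a b) n <-> geo a n /\ geo b n.
Proof. destruct a, b; simpl; try tauto. rewrite Nat.min_glb_iff. tauto. Qed.

Lemma fold_geo l n : geo (fold_right omin None l) n <-> (forall o, In o l -> geo o n).
Proof.
  induction l as [|a l IH]; simpl.
  - split; auto. intros _ o [].
  - rewrite geo_omin, IH. split.
    + intros [Ha Hl] o [<-|Ho]; auto.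
    + intros H; split; auto.
Qed.

Lemma min_upto_geo M F n : geo (min_upto M F) n <-> (forall t, (t <= M)%nat -> geo (F t) n).
Proof.
  unfold min_upto. rewrite fold_geo. split.
  - intros H t Ht. apply H. apply in_map. apply in_seq. lia.
  - intros H o Ho. apply in_map_iff in Ho. destruct Ho as [t [<- Ht]].
    apply in_seq in Ht. apply H. lia.
Qed.

Lemma geo_ext o1 o2 : (forall n, geo o1 n <-> geo o2 n) -> o1 = o2.
Proof.
  intros H. destruct o1 as [m|], o2 as [k|]; simpl in H.
  - f_equal. pose proof (proj1 (H m) (le_n m)). pose proof (proj2 (H k) (le_n k)). lia.
  - exfalso. pose proof (proj2 (H (S m)) I). lia.
  - exfalso. pose proof (proj1 (H (S k)) I). lia.
  - auto.
Qed.

Lemma min_upto_eq M F G :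
  (forall n, (forall t, (t <= M)%nat -> geo (F t) n) <-> (forall t, (t <= M)%nat -> geo (G t) n)) ->
  min_upto M F = min_upto M G.
Proof. intros H. apply geo_ext. intros n. rewrite !min_upto_geo. apply H. Qed.

Lemma Cmult_integral' (a b : C) : a * b = 0 -> a = 0 \/ b = 0.
Proof.
  intros H. destruct (classic (a = 0)) as [Ha|Ha]; [left; auto|right].
  replace b with (/ a * (a * b)) by (field; auto). rewrite H. ring.
Qed.

Lemma Cinv_ne0 (a : C) : a <> 0 -> / a <> 0.
Proof. intros Ha E. assert (a * / a = 1) by (field; auto). rewrite E, Cmult_0_r in H.
  pose proof (f_equal Cmod H). rewrite Cmod_0 in H0. unfold Cmod in H0. simpl in H0.
  replace (1 * (1 * 1) + 0 * (0 * 1))%R with 1%R in H0 by ring. rewrite sqrt_1 in H0. lra. Qed.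

Lemma Cmod_1' : Cmod 1 = 1%R.
Proof. unfold Cmod. simpl. replace (1 * (1 * 1) + 0 * (0 * 1))%R with 1%R by ring. apply sqrt_1. Qed.

Lemma C1_neq_0 : (1 : C) <> 0.
Proof. intro E. pose proof Cmod_1'. rewrite E, Cmod_0 in H. lra. Qed.

Lemma Csqrt_ex (c : C) : exists r : C, r * r = c.
Proof.
  destruct c as [a b].
  set (m := sqrt (a ^ 2 + b ^ 2)).
  assert (Hm0 : (0 <= m)%R) by apply sqrt_pos.
  assert (Hm2 : (m * m = a * a + b * b)%R).
  { unfold m. rewrite sqrt_sqrt by nra. ring. }
  assert (HP : (0 <= (m + a) / 2)%R) by nra.
  assert (HQ : (0 <= (m - a) / 2)%R) by nra.
  set (u := sqrt ((m + a) / 2)).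
  set (v0 := sqrt ((m - a) / 2)).
  assert (Hu : (u * u = (m + a) / 2)%R) by (apply sqrt_sqrt; auto).
  assert (Hv : (v0 * v0 = (m - a) / 2)%R) by (apply sqrt_sqrt; auto).
  assert (Hu0 : (0 <= u)%R) by apply sqrt_pos.
  assert (Hv0 : (0 <= v0)%R) by apply sqrt_pos.
  assert (Huv : (u * v0 = Rabs b / 2)%R).
  { assert (E : ((u * v0) * (u * v0) = (Rabs b / 2) * (Rabs b / 2))%R).
    { replace ((u * v0) * (u * v0))%R with ((u*u) * (v0*v0))%R by ring.
      rewrite Hu, Hv. replace (Rabs b / 2 * (Rabs b / 2))%R with ((Rabs b * Rabs b) / 4)%R by field.
      rewrite <- Rabs_mult. rewrite Rabs_right by nra. nra. }
    pose proof (Rabs_pos b).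
    assert (0 <= u * v0)%R by nra.
    nra. }
  destruct (Rle_dec 0 b) as [Hb|Hb].
  - exists (u, v0). unfold Cmult; simpl. f_equal.
    + nra.
    + rewrite Rabs_right in Huv by lra. nra.
  - exists (u, - v0)%R. unfold Cmult; simpl. f_equal.
    + nra.
    + rewrite Rabs_left in Huv by lra. nra.
Qed.

Lemma quad_roots (u a : C) : u <> 0 -> a <> 0 -> (u + / u) / 2 = (a + / a) / 2 -> u = a \/ u = / a.
Proof.
  intros Hu Ha E.
  assert (E2 : (u - a) * (u - / a) = 0).
  { replace ((u - a) * (u - / a)) with (u * 2 * ((u + / u) / 2 - (a + / a) / 2)) by (field; auto).
    rewrite E. ring. }
  apply Cmult_integral' in E2. destruct E2 as [E2|E2]; [left|right].
  - replace u with (u - a + a) by ring. rewrite E2; ring.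
  - replace u with (u - / a + / a) by ring. rewrite E2; ring.
Qed.

Lemma zspec_ex x : exists z, zspec x z.
Proof.
  destruct (Csqrt_ex (x * x - 1)) as [r Hr].
  set (z1 := x + r). set (z2 := x - r).
  assert (H12 : z1 * z2 = 1). { unfold z1, z2. replace ((x + r) * (x - r)) with (x * x - r * r) by ring. rewrite Hr. ring. }
  assert (Hz1 : z1 <> 0). { intro E. rewrite E in H12. rewrite Cmult_0_l in H12. apply C1_neq_0. auto. }
  assert (Hz2 : z2 <> 0). { intro E. rewrite E in H12. rewrite Cmult_0_r in H12. apply C1_neq_0. auto. }
  assert (Hi1 : / z1 = z2). { replace z2 with (z2 * z1 * / z1) by (field; auto). rewrite Cmult_comm in H12. rewrite H12. ring. }
  assert (Hi2 : / z2 = z1). { replace z1 with (z1 * z2 * / z2) by (field; auto). rewrite H12. ring. }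
  assert (Hs1 : (z1 + / z1) / 2 = x). { rewrite Hi1. unfold z1, z2. field. }
  assert (Hs2 : (z2 + / z2) / 2 = x). { rewrite Hi2. unfold z1, z2. field. }
  assert (Hm : (Cmod z1 * Cmod z2 = 1)%R). { rewrite <- Cmod_mult, H12. apply Cmod_1'. }
  pose proof (Cmod_ge_0 z1). pose proof (Cmod_ge_0 z2).
  destruct (Rlt_le_dec 1 (Cmod z1)) as [G|G].
  - exists z1. split; auto.
  - destruct (Rle_lt_or_eq_dec _ _ G) as [G2|G2].
    + exists z2. split; auto. split; auto. left. nra.
    + destruct (Rle_dec 0 (Im z1)) as [I1|I1].
      * exists z1. split; auto.
      * exists z2. split; auto. split; auto. right. split; [nra|].
        assert (Ec : z2 = Cconj z1).
        { pose proof (Cmod2_conj z1) as Hc. rewrite G2 in Hc. simpl in Hc.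
          replace z2 with (z1 * z2 * / z1) by (field; auto). rewrite H12.
          replace (Cconj z1) with (z1 * Cconj z1 * / z1) by (field; auto).
          rewrite <- Hc. replace (1 * (1 * 1))%R with 1%R by ring. reflexivity. }
        rewrite Ec. unfold Im, Cconj in *. simpl in *. lra.
Qed.

Lemma zof_spec x : zspec x (zof x).
Proof. unfold zof. apply epsilon_spec. apply zspec_ex. Qed.

Section Adm.
Variables (s : C) (M : nat) (Rc : R).
Hypothesis Hs : (Cmod s < 1)%R.
Hypothesis Hs0 : s <> 0.
Hypothesis HR : R_admissible s M Rc.

Lemma zof_ne0 (y : C) : zof y <> 0.
Proof. apply (zof_spec y). Qed.

Lemma sigma_1 (y : C) : sigma s 1 y = (s * zof y + / s / zof y) / 2.
Proof. unfold sigma; simpl. pose proof (zof_ne0 y). field. auto. Qed.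

Lemma sigma_m1 (y : C) : sigma s (-1) y = (/ s * zof y + s / zof y) / 2.
Proof. unfold sigma; simpl. pose proof (zof_ne0 y). field. auto. Qed.

Lemma sigma0 (w : C) : sigma s 0 w = w.
Proof.
  destruct (zof_spec w) as [Hz [He _]]. unfold sigma; simpl.
  rewrite <- He at 3. field. auto.
Qed.

Lemma adm_comp (w : C) (a b : Z) (h : C -> C) : (Rc < Cmod w)%R ->
  (Z.abs a <= Z.of_nat M)%Z -> (Z.abs b <= Z.of_nat M)%Z ->
  h (sigma s b (sigma s a w)) = h (sigma s (a + b) w).
Proof.
  intros Hw Ha Hb. destruct HR as [_ H]. destruct (H h w Hw) as [_ H2].
  exact (H2 a b Ha Hb).
Qed.

Lemma adm_comp_id (w : C) (a b : Z) : (Rc < Cmod w)%R ->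
  (Z.abs a <= Z.of_nat M)%Z -> (Z.abs b <= Z.of_nat M)%Z ->
  sigma s b (sigma s a w) = sigma s (a + b) w.
Proof. intros. exact (adm_comp w a b (fun y => y) H H0 H1). Qed.

Lemma ss_ne1 : s * s <> 1.
Proof.
  intro E. pose proof (Cmod_mult s s) as H. rewrite E, Cmod_1' in H.
  pose proof (Cmod_ge_0 s). nra.
Qed.

Lemma Cmod_eps (eps : C) : eps * eps = 1 -> Cmod eps = 1%R.
Proof.
  intros E. pose proof (Cmod_mult eps eps) as H. rewrite E, Cmod_1' in H.
  pose proof (Cmod_ge_0 eps). nra.
Qed.

Lemma eps_ne0 (eps : C) : eps * eps = 1 -> eps <> 0.
Proof. intros E H. rewrite H in E. rewrite Cmult_0_l in E. apply C1_neq_0; auto. Qed.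

Lemma eps_inv (eps : C) : eps * eps = 1 -> / eps = eps.
Proof. intros E. pose proof (eps_ne0 eps E). replace (/ eps) with (eps * eps * / eps) by (rewrite E; ring).
  field. auto. Qed.

Lemma zof_eps (eps : C) : eps * eps = 1 -> zof eps = eps.
Proof.
  intros E. pose proof (eps_ne0 eps E) as He. destruct (zof_spec eps) as [Hu [Hq _]].
  assert (Hq' : (zof eps + / zof eps) / 2 = (eps + / eps) / 2).
  { rewrite Hq, eps_inv by auto. field. }
  destruct (quad_roots _ _ Hu He Hq') as [H|H]; auto. rewrite H. apply eps_inv; auto.
Qed.

Lemma no_pm1 (w : C) (k : Z) (eps : C) : (Rc < Cmod w)%R -> (Z.abs k + 1 <= Z.of_nat M)%Z ->
  eps * eps = 1 -> sigma s k w <> eps.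
Proof.
  intros Hw Hk Heps E.
  pose proof (eps_ne0 eps Heps) as He. pose proof (eps_inv eps Heps) as Hie.
  set (y1 := sigma s 1 eps).
  assert (E1 : sigma s (k + 1) w = y1).
  { rewrite <- adm_comp_id by (auto; lia). rewrite E. reflexivity. }
  assert (Hy1 : y1 = (s * eps + / s / eps) / 2).
  { unfold y1. rewrite sigma_1, zof_eps; auto. }
  assert (Hz : zof y1 = eps / s).
  { destruct (zof_spec y1) as [Hu [Hq Hm]].
    assert (Ha : eps / s <> 0) by (apply Cmult_neq_0; auto; apply Cinv_ne0; auto).
    assert (Hq' : (zof y1 + / zof y1) / 2 = (eps / s + / (eps / s)) / 2).
    { rewrite Hq, Hy1. replace (/ s / eps) with (eps / s) by (unfold Cdiv; rewrite Hie; apply Cmult_comm). replace (/ (eps / s)) with (s * / eps) by (field; auto). rewrite Hie. field; auto. }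
    destruct (quad_roots _ _ Hu Ha Hq') as [H|H]; auto.
    exfalso. assert (Cmod (zof y1) = Cmod s).
    { rewrite H. replace (/ (eps / s)) with (s * / eps) by (field; auto).
      rewrite Cmod_mult, Hie, (Cmod_eps eps Heps). ring. }
    destruct Hm as [Hm|[Hm _]]; lra. }
  assert (E2 : sigma s (-1) y1 = eps).
  { rewrite <- E1. rewrite adm_comp_id by (auto; lia). rewrite <- E. f_equal. ring. }
  rewrite sigma_m1, Hz in E2.
  assert (Hss : (s * s - 1) * (s * s - 1) = 0).
  { replace ((s * s - 1) * (s * s - 1)) with
      (2 * s * s * eps * ((/ s * (eps / s) + s / (eps / s)) / 2 - eps) + (1 - eps * eps) * (1 - 2 * s * s))
      by (field; auto).
    rewrite E2, Heps. ring. }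
  apply Cmult_integral' in Hss. apply ss_ne1.
  destruct Hss as [H|H]; replace (s * s) with (s * s - 1 + 1) by ring; rewrite H; ring.
Qed.

Lemma delta_ne (w : C) (k : Z) : (Rc < Cmod w)%R -> (Z.abs k + 1 <= Z.of_nat M)%Z ->
  sigma s (k + 1) w - sigma s (k + -1) w <> 0.
Proof.
  intros Hw Hk E.
  rewrite <- (adm_comp_id w k 1), <- (adm_comp_id w k (-1)) in E by (auto; lia).
  set (y := sigma s k w) in *.
  destruct (zof_spec y) as [Hu [Hq _]].
  rewrite sigma_1, sigma_m1 in E.
  assert (E2 : (s * s - 1) * ((zof y * zof y - 1)) = 0).
  { replace ((s * s - 1) * ((zof y * zof y - 1))) with
      (2 * s * zof y * ((s * zof y + / s / zof y) / 2 - (/ s * zof y + s / zof y) / 2)) by (field; auto).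
    rewrite E. ring. }
  apply Cmult_integral' in E2. destruct E2 as [H|H].
  - apply ss_ne1. replace (s * s) with (s * s - 1 + 1) by ring; rewrite H; ring.
  - assert (Hu2 : zof y * zof y = 1) by (replace (zof y * zof y) with (zof y * zof y - 1 + 1) by ring; rewrite H; ring).
    apply (no_pm1 w k (zof y) Hw Hk Hu2). fold y.
    transitivity ((zof y + / zof y) / 2); [symmetry; exact Hq|].
    rewrite (eps_inv _ Hu2). field.
Qed.

Lemma AW_at (w : C) (k : Z) (g : C -> C) : (Rc < Cmod w)%R -> (Z.abs k + 1 <= Z.of_nat M)%Z ->
  AW s g (sigma s k w) =
  (g (sigma s (k + 1) w) - g (sigma s (k + -1) w)) / (sigma s (k + 1) w - sigma s (k + -1) w).
Proof.
  intros Hw Hk. unfold AW.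
  destruct (excluded_middle_informative _) as [[E|E]|_].
  - exfalso. apply (no_pm1 w k 1 Hw Hk); auto. ring.
  - exfalso. apply (no_pm1 w k (- (1)) Hw Hk); auto. ring.
  - unfold AW_quot, eta, etainv.
    rewrite (adm_comp w k 1 g), (adm_comp w k (-1) g), (adm_comp_id w k 1), (adm_comp_id w k (-1))
      by (auto; lia).
    reflexivity.
Qed.

Lemma zof_gt1 (w : C) : (Rc < Cmod w)%R -> (1 <= M)%nat -> (1 < Cmod (zof w))%R.
Proof.
  intros Hw HM. destruct (zof_spec w) as [Hz [Hq [H|[H _]]]]; auto. exfalso.
  set (z := zof w) in *.
  set (y := sigma s 1 w).
  assert (Hy : y = (s * z + / s / z) / 2) by (unfold y; apply sigma_1).
  assert (Hsz : s * z <> 0) by (apply Cmult_neq_0; auto).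
  assert (Hu : zof y = / (s * z)).
  { destruct (zof_spec y) as [Hu [Hq' Hm]].
    assert (Hq2 : (zof y + / zof y) / 2 = (s * z + / (s * z)) / 2).
    { rewrite Hq', Hy. field. auto. }
    destruct (quad_roots _ _ Hu Hsz Hq2) as [E|E]; auto.
    exfalso. assert (Cmod (zof y) = Cmod s) by (rewrite E, Cmod_mult, H; ring).
    destruct Hm as [Hm|[Hm _]]; lra. }
  assert (E : sigma s (-1) y = w).
  { unfold y. rewrite adm_comp_id by (auto; lia). simpl. apply sigma0. }
  rewrite sigma_m1, Hu in E. rewrite <- Hq in E.
  assert (E2 : (1 - s * s) * (1 - s * s * z * z) = 0).
  { replace ((1 - s * s) * (1 - s * s * z * z)) with
      (- (2 * s * s * z) * ((z + / z) / 2 - (/ s * / (s * z) + s / / (s * z)) / 2)) by (field; auto).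
    rewrite E. ring. }
  apply Cmult_integral' in E2. destruct E2 as [E3|E3].
  - apply ss_ne1. replace (s * s) with (1 - (1 - s * s)) by ring. rewrite E3. ring.
  - assert (E4 : s * s * z * z = 1) by (replace (s * s * z * z) with (1 - (1 - s * s * z * z)) by ring; rewrite E3; ring).
    pose proof (Cmod_mult (s * s * z) z). rewrite E4, Cmod_1', !Cmod_mult, H in H0.
    pose proof (Cmod_ge_0 s). nra.
Qed.

End Adm.

Lemma exd_sub f g w : exd f w -> exd g w -> exd (fun y => f y - g y) w.
Proof.
  intros Hf Hg. apply (exd_ext (fun y => f y + (-1) * g y)). intros; ring.
  apply exd_plus; auto. apply exd_mult; auto. apply exd_const.
Qed.

Lemma disc_in (x w : C) (Rc : R) : (Cmod (w - x) < Cmod x - Rc)%R -> (Rc < Cmod w)%R.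
Proof.
  intros H. pose proof (Cmod_sub_ge x (x - w)). replace (x - (x - w)) with w in H0 by ring.
  rewrite <- Cmod_opp in H. replace (- (w - x)) with (x - w) in H by ring. lra.
Qed.

Lemma Cmod_2 : Cmod 2 = 2%R.
Proof. unfold Cmod. simpl. replace (2 * (2 * 1) + 0 * (0 * 1))%R with (2 * 2)%R by ring.
  rewrite sqrt_square; lra. Qed.

Section Holo.
Variables (s : C) (M : nat) (Rc : R).
Hypothesis Hs : (Cmod s < 1)%R.
Hypothesis Hs0 : s <> 0.
Hypothesis HR : R_admissible s M Rc.
Hypothesis HM : (1 <= M)%nat.

Lemma zof_exd (w0 : C) : (Rc < Cmod w0)%R -> exd zof w0.
Proof.
  intros Hw0.
  pose proof (zof_gt1 s M Rc Hs Hs0 HR w0 Hw0 HM) as Hb.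
  destruct (zof_spec w0) as [Hz0 [Hq0 _]].
  set (z0 := zof w0) in *.
  set (b := Cmod z0) in *.
  assert (Hc : z0 * z0 - 1 <> 0).
  { intro E. assert (z0 * z0 = 1) by (replace (z0 * z0) with (z0 * z0 - 1 + 1) by ring; rewrite E; ring).
    pose proof (Cmod_mult z0 z0). rewrite H, Cmod_1' in H0. fold b in H0.
    assert (b < b * b) by (rewrite <- (Rmult_1_r b) at 1; apply Rmult_lt_compat_l; lra). lra. }
  set (c := Cmod (z0 * z0 - 1)).
  assert (Hc0 : (0 < c)%R) by (apply Cmod_gt_0; auto).
  set (L := (2 * b / (b - 1))%R).
  exists (2 * z0 * z0 / (z0 * z0 - 1)).
  apply (is_derive_quad _ _ _ (Cmod w0 - Rc) (L * L / c)); [lra|].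
  intros w Hw. pose proof (disc_in w0 w Rc Hw) as HwU.
  pose proof (zof_gt1 s M Rc Hs Hs0 HR w HwU HM) as Hzb.
  destruct (zof_spec w) as [Hz [Hq _]].
  fold z0. remember (zof w) as z eqn:Ez. clear Ez.
  assert (I1 : (z - z0) * (z * z0 - 1) = 2 * (w - w0) * z * z0).
  { rewrite <- Hq, <- Hq0. field. auto. }
  assert (Hzz : z * z0 - 1 <> 0).
  { intro E. assert (z * z0 = 1) by (replace (z * z0) with (z * z0 - 1 + 1) by ring; rewrite E; ring).
    pose proof (Cmod_mult z z0). rewrite H, Cmod_1' in H0. fold b in H0.
    assert (1 < Cmod z * b)%R by (replace 1%R with (1*1)%R by ring; apply Rmult_le_0_lt_compat; lra). lra. }
  assert (Ew : w - w0 = (z - z0) * (z * z0 - 1) / (2 * z * z0)).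
  { rewrite I1. field. auto. }
  assert (Erem : z - z0 - (w - w0) * (2 * z0 * z0 / (z0 * z0 - 1)) = - ((z - z0) * (z - z0)) / (z * (z0 * z0 - 1))).
  { rewrite Ew. field. auto. }
  rewrite Erem.
  set (a := Cmod (z - z0)). set (e := Cmod (w - w0)).
  assert (Ha : (a * Cmod (z * z0 - 1) = 2 * e * (Cmod z * b))%R).
  { unfold a, e, b. rewrite <- Cmod_mult, I1, !Cmod_mult, Cmod_2. ring. }
  assert (Hg : (Cmod z * b - 1 <= Cmod (z * z0 - 1))%R).
  { pose proof (Cmod_sub_ge (z * z0) 1). rewrite Cmod_1', Cmod_mult in H. exact H. }
  assert (Ha0 : (0 <= a)%R) by apply Cmod_ge_0.
  assert (He0 : (0 <= e)%R) by apply Cmod_ge_0.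
  assert (HaL : (a <= L * e)%R).
  { unfold L. 
    assert (H1 : (a * (Cmod z * b - 1) <= 2 * e * (Cmod z * b))%R) by (rewrite <- Ha; apply Rmult_le_compat_l; auto).
    assert (Hzb' : (b <= Cmod z * b)%R) by (rewrite <- (Rmult_1_l b) at 1; apply Rmult_le_compat_r; lra).
    assert (H2 : (a * (b - 1) * (Cmod z * b) <= 2 * e * b * (Cmod z * b))%R).
    { assert (a * (b - 1) * (Cmod z * b) <= a * b * (Cmod z * b - 1))%R.
      { assert (a * b <= a * (Cmod z * b))%R by (apply Rmult_le_compat_l; lra).
        replace (a*(b-1)*(Cmod z*b))%R with (a*b*(Cmod z*b) - a*(Cmod z*b))%R by ring.
        replace (a*b*(Cmod z*b-1))%R with (a*b*(Cmod z*b) - a*b)%R by ring. lra. }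
      assert (a * b * (Cmod z * b - 1) <= b * (2 * e * (Cmod z * b)))%R.
      { rewrite (Rmult_comm a b), Rmult_assoc. apply Rmult_le_compat_l; lra. }
      lra. }
    assert (H3 : (a * (b - 1) <= 2 * e * b)%R).
    { apply (Rmult_le_reg_r (Cmod z * b)); [apply Rmult_lt_0_compat; lra | exact H2]. }
    apply (Rmult_le_reg_r (b - 1)); [lra|].
    unfold Rdiv. replace (2 * b * / (b - 1) * e * (b - 1))%R with (2 * e * b)%R by (field; lra). lra. }
  unfold Cdiv. rewrite Cmod_mult, Cmod_opp, Cmod_mult, Cmod_inv, Cmod_mult.
  2:{ apply Cmult_neq_0; auto. }
  fold a c.
  assert (HL0 : (0 <= L)%R) by (unfold L; apply Rmult_le_pos; [lra| left; apply Rinv_0_lt_compat; lra]).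
  apply Rle_trans with (a * a / c)%R.
  - unfold Rdiv. apply Rmult_le_compat_l; [apply Rmult_le_pos; auto|]. apply Rinv_le_contravar; [lra|].
    rewrite <- (Rmult_1_l c) at 1. apply Rmult_le_compat_r; lra.
  - unfold Rdiv. replace (L * L * / c * (e * e))%R with ((L * e) * (L * e) * / c)%R by ring.
    apply Rmult_le_compat_r; [left; apply Rinv_0_lt_compat; auto|]. apply Rmult_le_compat; auto.
Qed.

Lemma sigma_exd (a : Z) (w : C) : (Rc < Cmod w)%R -> exd (sigma s a) w.
Proof.
  intros Hw. apply (exd_ext (fun y => (CpowZ s a * zof y + CpowZ s (- a) * (/ zof y)) * / 2)).
  { intros y. reflexivity. }
  apply (exd_mult (fun y => CpowZ s a * zof y + CpowZ s (- a) * (/ zof y)) (fun _ => / 2)); [|apply exd_const].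
  apply (exd_plus (fun y => CpowZ s a * zof y) (fun y => CpowZ s (- a) * (/ zof y))).
  - apply (exd_mult (fun _ => CpowZ s a) zof); [apply exd_const|]. apply zof_exd; auto.
  - apply (exd_mult (fun _ => CpowZ s (- a)) (fun y => / zof y)); [apply exd_const|].
    apply (exd_comp Cinv zof). apply exd_Cinv. apply zof_ne0. apply zof_exd; auto.
Qed.

Lemma delta_holo (x : C) (k : Z) : (Rc < Cmod x)%R ->
  holo_on_disc (fun w => sigma s (k + 1) w - sigma s (k + -1) w) x (Cmod x - Rc).
Proof.
  intros Hx w Hw. pose proof (disc_in x w Rc Hw).
  apply (exd_sub (sigma s (k + 1)) (sigma s (k + -1))); apply sigma_exd; auto.
Qed.

Lemma delta_inv_holo (x : C) (k : Z) : (Rc < Cmod x)%R -> (Z.abs k + 1 <= Z.of_nat M)%Z ->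
  holo_on_disc (fun w => / (sigma s (k + 1) w - sigma s (k + -1) w)) x (Cmod x - Rc).
Proof.
  intros Hx Hk w Hw. pose proof (disc_in x w Rc Hw).
  apply (exd_comp Cinv (fun w => sigma s (k + 1) w - sigma s (k + -1) w)).
  - apply exd_Cinv. apply (delta_ne s M Rc Hs Hs0 HR); auto.
  - apply (exd_sub (sigma s (k + 1)) (sigma s (k + -1))); apply sigma_exd; auto.
Qed.

End Holo.

Lemma zog_zero x n : zero_order_ge (fun _ => 0) x n.
Proof.
  destruct n; [left; auto|right]. exists 1%R, (fun _ => 0). split; [lra|split].
  - apply holo_const.
  - intros; ring.
Qed.

Lemma zog_iff (g g' : C -> C) x n r : (0 < r)%R ->
  (forall w, (Cmod (w - x) < r)%R -> w <> x -> g w = g' w) ->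
  (zero_order_ge g x n <-> zero_order_ge g' x n).
Proof.
  intros Hr He. split; apply (zog_ext _ _ x n r Hr); auto.
  intros; symmetry; auto.
Qed.

Lemma zog_id (g g' : C -> C) x n : (forall w, g w = g' w) ->
  zero_order_ge g x n -> zero_order_ge g' x n.
Proof. intros He. apply (zog_ext _ _ x n 1); [lra|]. intros; auto. Qed.

Lemma LA (x : C) (P : nat -> C -> C) (N : nat) (d : nat -> C -> C) (r : R) n :
  (0 < r)%R ->
  (forall j, (j < N)%nat -> holo_on_disc (d j) x r /\ holo_on_disc (fun w => / d j w) x r /\
      forall w, (Cmod (w - x) < r)%R -> d j w <> 0) ->
  ((zero_order_ge (fun w => (P 0%nat w + P N w) / 2) x n /\
    forall j, (j < N)%nat -> zero_order_ge (fun w => (P j w - P (S j) w) / d j w) x n)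
   <-> (forall j, (j <= N)%nat -> zero_order_ge (P j) x n)).
Proof.
  intros Hr Hd. split.
  - intros [HS HD].
    assert (Hdiff : forall j, (j < N)%nat -> zero_order_ge (fun w => P j w - P (S j) w) x n).
    { intros j Hj. destruct (Hd j Hj) as [H1 [_ H3]].
      apply (zog_ext (fun w => d j w * ((P j w - P (S j) w) / d j w)) _ x n r Hr).
      - intros w Hw _. field. apply H3; auto.
      - apply (zog_mulh (d j) _ x n r Hr H1). apply HD; auto. }
    assert (Hcum : forall j, (j <= N)%nat -> zero_order_ge (fun w => P 0%nat w - P j w) x n).
    { induction j as [|j IH]; intros Hj.
      - apply (zog_id (fun _ => 0)); [intros; ring|]. apply zog_zero.
      - apply (zog_id (fun w => (P 0%nat w - P j w) + (P j w - P (S j) w))); [intros; ring|].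
        apply zog_plus; [apply IH; lia| apply Hdiff; lia]. }
    assert (H0 : zero_order_ge (P 0%nat) x n).
    { apply (zog_id (fun w => (P 0%nat w + P N w) / 2 + / 2 * (P 0%nat w - P N w))).
      - intros; field.
      - apply zog_plus; auto. apply zog_scal. apply Hcum; auto. }
    intros j Hj.
    apply (zog_id (fun w => P 0%nat w + (-1) * (P 0%nat w - P j w))); [intros; ring|].
    apply zog_plus; auto. apply zog_scal. apply Hcum; auto.
  - intros HP. split.
    + apply (zog_id (fun w => / 2 * (P 0%nat w + P N w))); [intros; unfold Cdiv; ring|].
      apply zog_scal. apply zog_plus; apply HP; lia.
    + intros j Hj. destruct (Hd j Hj) as [_ [H2 _]].
      apply (zog_id (fun w => / d j w * (P j w + (-1) * P (S j) w))); [intros; unfold Cdiv; ring|].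
      apply (zog_mulh _ _ x n r Hr H2). apply zog_plus; [apply HP; lia|]. apply zog_scal. apply HP; lia.
Qed.

Section Main.
Variables (s : C) (M : nat) (Rc : R).
Hypothesis Hs : (Cmod s < 1)%R.
Hypothesis Hs0 : s <> 0.
Hypothesis HR : R_admissible s M Rc.
Variable x : C.
Hypothesis Hx : (Rc < Cmod x)%R.

Lemma main_ind (m : nat) : (m <= M)%nat -> forall g n,
  (forall t, (t <= m)%nat -> zero_order_ge (Aop s (m - t) (AWn s t g)) x n) <->
  (forall j, (j <= m)%nat -> zero_order_ge (eta_qpow s (Z.of_nat m - 2 * Z.of_nat j) g) x n).
Proof.
  assert (Hr : (0 < Cmod x - Rc)%R) by lra.
  induction m as [|m IH]; intros Hm g n.
  - split; intros H t Ht; assert (t = 0%nat) by lia; subst t; specialize (H 0%nat (le_n 0)).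
    + apply (zog_id g); auto. intros w. unfold eta_qpow. simpl. rewrite sigma0; auto.
    + apply (zog_id (eta_qpow s 0 g)); auto. intros w. unfold eta_qpow. simpl. rewrite sigma0; auto.
  - assert (HM : (1 <= M)%nat) by lia.
    set (P := fun (j : nat) => eta_qpow s (Z.of_nat (S m) - 2 * Z.of_nat j) g).
    set (k := fun (j : nat) => (Z.of_nat m - 2 * Z.of_nat j)%Z).
    set (d := fun (j : nat) (w : C) => sigma s (k j + 1) w - sigma s (k j + -1) w).
    assert (Hk : forall j, (j <= m)%nat -> (Z.abs (k j) + 1 <= Z.of_nat M)%Z).
    { intros j Hj. unfold k. lia. }
    assert (HLA := LA x P (S m) d (Cmod x - Rc) n Hr).
    assert (Hd : forall j, (j < S m)%nat -> holo_on_disc (d j) x (Cmod x - Rc) /\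
                 holo_on_disc (fun w => / d j w) x (Cmod x - Rc) /\
                 forall w, (Cmod (w - x) < Cmod x - Rc)%R -> d j w <> 0).
    { intros j Hj. split; [|split].
      - apply (delta_holo s M Rc Hs Hs0 HR HM); auto.
      - apply (delta_inv_holo s M Rc Hs Hs0 HR HM); auto. apply Hk; lia.
      - intros w Hw. apply (delta_ne s M Rc Hs Hs0 HR); [eapply disc_in; eauto|apply Hk; lia]. }
    specialize (HLA Hd). eapply iff_trans; [|exact HLA]. clear HLA.
    assert (EA : zero_order_ge (Aop s (S m) g) x n <-> zero_order_ge (fun w => (P 0%nat w + P (S m) w) / 2) x n).
    { apply (zog_iff _ _ x n 1); [lra|]. intros w _ _. unfold P, Aop, eta_qpow.
      replace (Z.of_nat (S m) - 2 * Z.of_nat 0)%Z with (Z.of_nat (S m)) by lia.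
      replace (Z.of_nat (S m) - 2 * Z.of_nat (S m))%Z with (- Z.of_nat (S m))%Z by lia. reflexivity. }
    assert (EB : forall j, (j <= m)%nat ->
      (zero_order_ge (eta_qpow s (Z.of_nat m - 2 * Z.of_nat j) (AW s g)) x n <->
       zero_order_ge (fun w => (P j w - P (S j) w) / d j w) x n)).
    { intros j Hj. apply (zog_iff _ _ x n (Cmod x - Rc) Hr). intros w Hw _.
      pose proof (disc_in x w Rc Hw) as HwU.
      unfold eta_qpow at 1. fold (k j). rewrite (AW_at s M Rc Hs Hs0 HR w (k j) g HwU (Hk j Hj)).
      unfold P, d, eta_qpow.
      replace (Z.of_nat (S m) - 2 * Z.of_nat j)%Z with (k j + 1)%Z by (unfold k; lia).
      replace (Z.of_nat (S m) - 2 * Z.of_nat (S j))%Z with (k j + -1)%Z by (unfold k; lia).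
      reflexivity. }
    split.
    + intros H. split.
      * apply EA. exact (H 0%nat (Nat.le_0_l _)).
      * assert (H' : forall t, (t <= m)%nat -> zero_order_ge (Aop s (m - t) (AWn s t (AW s g))) x n).
        { intros t Ht. specialize (H (S t) ltac:(lia)). unfold AWn in *. rewrite Nat.iter_succ_r in H. exact H. }
        pose proof (proj1 (IH ltac:(lia) (AW s g) n) H') as H''.
        intros j Hj. apply (proj1 (EB j ltac:(lia))). apply H''. lia.
    + intros [HA HB] t Ht. destruct t as [|t].
      * apply EA. exact HA.
      * unfold AWn. rewrite Nat.iter_succ_r.
        assert (H' : forall j, (j <= m)%nat -> zero_order_ge (eta_qpow s (Z.of_nat m - 2 * Z.of_nat j) (AW s g)) x n).
        { intros j Hj. apply EB; auto. apply HB. lia. }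
        pose proof (proj2 (IH ltac:(lia) (AW s g) n) H') as H''. apply (H'' t). lia.
Qed.

End Main.

Theorem lemma5p2 (q s : C) (M : nat) (Rc : R) (f : C -> C) :
  (0 < Cmod q)%R -> (Cmod q < 1)%R -> s * s = q ->
  R_admissible s M Rc ->
  meromorphic f ->
  forall x : C, (Rc < Cmod x)%R ->
    min_upto M (fun t => nu0 (Aop s (M - t) (AWn s t f)) x)
    = min_upto M (fun t => nu0 (etaZ s (Z.of_nat M - 2 * Z.of_nat t) f) x).
Proof.
  intros Hq0 Hq1 Hsq HR _ x Hx.
  assert (Hmq : Cmod q = (Cmod s * Cmod s)%R) by (rewrite <- Hsq; apply Cmod_mult).
  assert (Hs : (Cmod s < 1)%R).
  { pose proof (Cmod_ge_0 s). destruct (Rlt_le_dec (Cmod s) 1); auto.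
    assert (1 * 1 <= Cmod s * Cmod s)%R by (apply Rmult_le_compat; lra). lra. }
  assert (Hs0 : s <> 0).
  { intro E. rewrite E, Cmod_0 in Hmq. lra. }
  assert (Hr : (0 < Cmod x - Rc)%R) by lra.
  apply min_upto_eq. intros n.
  assert (E1 : (forall t, (t <= M)%nat -> geo (nu0 (Aop s (M - t) (AWn s t f)) x) n) <->
               (forall t, (t <= M)%nat -> zero_order_ge (Aop s (M - t) (AWn s t f)) x n)).
  { split; intros H t Ht; apply nu0_char; auto. }
  assert (E2 : (forall t, (t <= M)%nat -> geo (nu0 (etaZ s (Z.of_nat M - 2 * Z.of_nat t) f) x) n) <->
               (forall t, (t <= M)%nat -> zero_order_ge (etaZ s (Z.of_nat M - 2 * Z.of_nat t) f) x n)).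
  { split; intros H t Ht; apply nu0_char; auto. }
  rewrite E1, E2. clear E1 E2.
  rewrite (main_ind s M Rc Hs Hs0 HR x Hx M (le_n M) f n).
  assert (E3 : forall t, (t <= M)%nat ->
    (zero_order_ge (eta_qpow s (Z.of_nat M - 2 * Z.of_nat t) f) x n <->
     zero_order_ge (etaZ s (Z.of_nat M - 2 * Z.of_nat t) f) x n)).
  { intros t Ht. apply (zog_iff _ _ x n _ Hr). intros w Hw _.
    pose proof (disc_in x w Rc Hw) as HwU.
    destruct HR as [_ HA]. destruct (HA f w HwU) as [HA1 _].
    destruct (le_lt_dec (2 * t) M) as [Hle|Hlt].
    - replace (Z.of_nat M - 2 * Z.of_nat t)%Z with (Z.of_nat (M - 2 * t)) by lia.
      symmetry. apply (HA1 (M - 2 * t)%nat). lia.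
    - replace (Z.of_nat M - 2 * Z.of_nat t)%Z with (- Z.of_nat (2 * t - M))%Z by lia.
      symmetry. apply (HA1 (2 * t - M)%nat). lia. }
  split; intros H t Ht; apply E3; auto.
Qed.
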